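(* Suppose that Assumptions (A1)–(A5) hold. If $(u,m)$ solves Problem 1, then $u,m\in C^{2,\frac12}(\mathbb{T})$.
   Context: Let $\mathbb{T}=\mathbb{R}/\mathbb{Z}$ be the one-dimensional torus; functions on $\mathbb{T}$ are identified with $1$-periodic functions on $\mathbb{R}$. $C^{2,\frac12}(\mathbb{T})$ denotes the functions of class $C^2$ on $\mathbb{T}$ whose second derivative is $\frac12$-Hölder continuous. Let $H:\mathbb{R}\to\mathbb{R}$ be of class $C^2$, $V:\mathbb{T}\to\mathbb{R}$ continuous, $\alpha>0$, and $0<\epsilon\le 1$. We say $(u,m)$ solves Problem 1 if $u,m\in C^2(\mathbb{T})$, $m>0$ on $\mathbb{T}$, and on $\mathbb{T}$: $$u-u_{xx}+H(u_x)+V(x)=m^\alpha+\epsilon(m-m_{xx}),\qquad m-m_{xx}-(H'(u_x)m)_x=1-\epsilon(u-u_{xx}).$$ Assumptions: (A1) there exist constants $C_1,C_2,C_3>0$ and $\gamma>1$ such that $-C_1+C_2|p|^\gamma\le H(p)\le C_1+C_3|p|^\gamma$ for all $p\in\mathbb{R}$. (A2) There exist constants $\tilde C_1,\tilde C_2,\tilde C_3>0$ such that $-\tilde C_1+\tilde C_2|p|^\gamma\le pH'(p)-H(p)\le \tilde C_1+\tilde C_3|p|^\gamma$ for all $p$ (same $\gamma$ as in (A1)). (A3) $V$ is of class $C^2$. (A4) $H$ is convex. (A5) $H$ is of class $C^4$. *)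

(* Defs.v *)
From Stdlib Require Import Reals.
Open Scope R_scope.

(* 1-periodic functions = functions on the torus T = R/Z *)
Definition periodic1 (f : R -> R) : Prop := forall x, f (x + 1) = f x.

Fixpoint Ck (k : nat) (f : R -> R) : Prop :=
  match k with
  | O => continuity f
  | S k' => exists f' : R -> R,
      (forall x, derivable_pt_lim f x (f' x)) /\ Ck k' f'
  end.

Definition holder_half (f : R -> R) : Prop :=
  exists C : R, forall x y, Rabs (f x - f y) <= C * sqrt (Rabs (x - y)).

Definition convex_fun (f : R -> R) : Prop :=
  forall x y t, 0 <= t <= 1 ->
    f (t * x + (1 - t) * y) <= t * f x + (1 - t) * f y.

(* Main.v *)
Require Import Defs.
From Stdlib Require Import Reals Lra Lia Psatz ZArith FunctionalExtensionality.
Open Scope R_scope.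

Lemma dcont (f f' : R -> R) : (forall x, derivable_pt_lim f x (f' x)) -> continuity f.
Proof. intros Hd x. apply derivable_continuous_pt. exists (f' x). apply Hd. Qed.

Definition IsC1 (f : R -> R) := exists f', (forall x, derivable_pt_lim f x (f' x)) /\ continuity f'.

Lemma C1_ext f g : (forall x, f x = g x) -> IsC1 f -> IsC1 g.
Proof. intros E Hf. assert (f = g) by (apply functional_extensionality; auto). subst; auto. Qed.

Lemma C1_const c : IsC1 (fun _ => c).
Proof. exists (fun _ => 0). split. intros; apply derivable_pt_lim_const. intros x; apply continuity_const; intros a b; auto. Qed.

Lemma C1_id : IsC1 (fun x => x).
Proof. exists (fun _ => 1). split. intros; apply derivable_pt_lim_id. intros x; apply continuity_const; intros a b; auto. Qed.

Lemma C1_plus f g : IsC1 f -> IsC1 g -> IsC1 (fun x => f x + g x).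
Proof. intros [f' [d1 c1]] [g' [d2 c2]]. exists (fun x => f' x + g' x). split.
 intros x. apply (derivable_pt_lim_plus f g); auto.
 apply (continuity_plus f' g'); auto. Qed.

Lemma C1_minus f g : IsC1 f -> IsC1 g -> IsC1 (fun x => f x - g x).
Proof. intros [f' [d1 c1]] [g' [d2 c2]]. exists (fun x => f' x - g' x). split.
 intros x. apply (derivable_pt_lim_minus f g); auto.
 apply (continuity_minus f' g'); auto. Qed.

Lemma C1_mult f g : IsC1 f -> IsC1 g -> IsC1 (fun x => f x * g x).
Proof. intros [f' [d1 c1]] [g' [d2 c2]]. exists (fun x => f' x * g x + f x * g' x). split.
 intros x. apply (derivable_pt_lim_mult f g); auto.
 apply (continuity_plus (fun x => f' x * g x) (fun x => f x * g' x)).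
 apply (continuity_mult f' g); auto. apply (dcont g g'); auto.
 apply (continuity_mult f g'); auto. apply (dcont f f'); auto. Qed.

Lemma C1_div f g : IsC1 f -> IsC1 g -> (forall x, g x <> 0) -> IsC1 (fun x => f x / g x).
Proof. intros [f' [d1 c1]] [g' [d2 c2]] nz.
 exists (fun x => (f' x * g x - g' x * f x) / (g x)²). split.
 intros x. apply (derivable_pt_lim_div f g); auto.
 assert (cf := dcont f f' d1). assert (cg := dcont g g' d2).
 apply (continuity_div (fun x => f' x * g x - g' x * f x) (fun x => (g x)²)).
 apply (continuity_minus (fun x => f' x * g x) (fun x => g' x * f x)).
 apply (continuity_mult f' g); auto. apply (continuity_mult g' f); auto.
 apply (continuity_mult g g); auto.
 intros x. unfold Rsqr. apply Rmult_integral_contrapositive; auto. Qed.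

Lemma C1_comp F g : IsC1 F -> IsC1 g -> IsC1 (fun x => F (g x)).
Proof. intros [F' [d1 c1]] [g' [d2 c2]]. exists (fun x => F' (g x) * g' x). split.
 intros x. apply (derivable_pt_lim_comp g F); auto.
 apply (continuity_mult (fun x => F' (g x)) g'); auto.
 apply (continuity_comp g F'); auto. apply (dcont g g'); auto. Qed.

Lemma C1_exp : IsC1 exp.
Proof. exists exp. split. apply derivable_pt_lim_exp. apply (dcont exp exp). apply derivable_pt_lim_exp. Qed.

Lemma C1_ln f : IsC1 f -> (forall x, 0 < f x) -> IsC1 (fun x => ln (f x)).
Proof. intros [f' [d1 c1]] pos. exists (fun x => / f x * f' x). split.
 intros x. apply (derivable_pt_lim_comp f ln); auto. apply derivable_pt_lim_ln; auto.
 apply (continuity_mult (fun x => / f x) f'); auto.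
 apply (continuity_inv f). apply (dcont f f'); auto. intros x; specialize (pos x); lra. Qed.

Lemma C1_Rpower f a : IsC1 f -> (forall x, 0 < f x) -> IsC1 (fun x => Rpower (f x) a).
Proof. intros Hf pos. unfold Rpower. apply (C1_comp exp (fun x => a * ln (f x))).
 apply C1_exp. apply C1_mult. apply C1_const. apply C1_ln; auto. Qed.

Lemma periodic_deriv f f' : periodic1 f -> (forall x, derivable_pt_lim f x (f' x)) -> periodic1 f'.
Proof. intros P d x.
 assert (E : (fun y => f (y + 1)) = f) by (apply functional_extensionality; auto).
 assert (D : derivable_pt_lim (fun y => f (y + 1)) x (f' (x + 1) * 1)).
 { apply (derivable_pt_lim_comp (fun y => y + 1) f). 
   pose proof (derivable_pt_lim_plus id (fct_cte 1) x 1 0 (derivable_pt_lim_id x) (derivable_pt_lim_const 1 x)) as Q.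
   rewrite Rplus_0_r in Q. exact Q.
   apply d. }
 rewrite E in D. pose proof (uniqueness_limite f x _ _ D (d x)). lra. Qed.

Lemma periodic_nat f : periodic1 f -> forall n x, f (x + INR n) = f x.
Proof. intros P n; induction n; intros x. simpl; f_equal; ring.
 rewrite S_INR. replace (x + (INR n + 1)) with ((x + INR n) + 1) by ring. rewrite P; auto. Qed.

Lemma periodic_Z f : periodic1 f -> forall z x, f (x - IZR z) = f x.
Proof. intros P z x. destruct (Z_le_gt_dec 0 z).
 - rewrite <- (Z2Nat.id z) by lia. rewrite <- INR_IZR_INZ.
   rewrite <- (periodic_nat f P (Z.to_nat z) (x - INR (Z.to_nat z))). f_equal; ring.
 - replace z with (- Z.of_nat (Z.to_nat (- z)))%Z by lia. rewrite opp_IZR, <- INR_IZR_INZ.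
   replace (x - - INR (Z.to_nat (- z))) with (x + INR (Z.to_nat (- z))) by ring.
   apply periodic_nat; auto. Qed.

Lemma periodic_bounded f : periodic1 f -> continuity f -> exists M, 0 <= M /\ forall x, Rabs (f x) <= M.
Proof. intros P c.
 destruct (continuity_ab_maj (fun x => Rabs (f x)) 0 1) as [Mx [HM _]]. lra.
 intros y _. apply (continuity_comp f Rabs); auto. apply Rcontinuity_abs.
 exists (Rabs (f Mx)). split. apply Rabs_pos.
 intros x. rewrite <- (periodic_Z f P (Int_part x) x). apply HM.
 destruct (base_Int_part x). lra. Qed.

Lemma C1_holder f : periodic1 f -> IsC1 f -> holder_half f.
Proof. intros P [f' [d c]].
 destruct (periodic_bounded f P (dcont f f' d)) as [M [M0 HM]].
 destruct (periodic_bounded f' (periodic_deriv f f' P d) c) as [L [L0 HL]].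
 assert (Lip : forall x y, Rabs (f x - f y) <= L * Rabs (x - y)).
 { assert (K : forall x y, x < y -> Rabs (f x - f y) <= L * Rabs (x - y)).
   { intros x y xy. destruct (MVT_cor2 f f' x y xy (fun c _ => d c)) as [z [E _]].
     rewrite <- Rabs_Ropp, Ropp_minus_distr, E, Rabs_mult.
     rewrite <- (Rabs_Ropp (x - y)), Ropp_minus_distr.
     apply Rmult_le_compat_r. apply Rabs_pos. apply HL. }
   intros x y. destruct (Rtotal_order x y) as [h|[h|h]]. auto.
   subst. unfold Rminus; rewrite Rplus_opp_r, Rabs_R0. apply Rmult_le_pos; [lra|apply Rabs_pos].
   rewrite <- Rabs_Ropp, Ropp_minus_distr. rewrite <- (Rabs_Ropp (x - y)), Ropp_minus_distr. auto. }
 exists (L + 2 * M). intros x y.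
 set (dd := Rabs (x - y)). assert (d0 : 0 <= dd) by apply Rabs_pos.
 assert (ss := sqrt_sqrt dd d0). assert (s0 := sqrt_pos dd).
 destruct (Rle_lt_dec dd 1).
 - assert (sqrt dd <= 1) by (rewrite <- sqrt_1; apply sqrt_le_1_alt; auto).
   specialize (Lip x y). fold dd in Lip.
   assert (dd <= sqrt dd). { rewrite <- ss at 1. rewrite <- (Rmult_1_r (sqrt dd)) at 3. apply Rmult_le_compat_l; auto. }
   assert (L * dd <= L * sqrt dd) by (apply Rmult_le_compat_l; auto).
   assert (0 <= 2 * M * sqrt dd) by (apply Rmult_le_pos; lra). lra.
 - assert (1 <= sqrt dd) by (rewrite <- sqrt_1; apply sqrt_le_1_alt; lra).
   assert (Rabs (f x - f y) <= 2 * M).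
   { unfold Rminus. eapply Rle_trans. apply Rabs_triang. rewrite Rabs_Ropp.
     pose proof (HM x); pose proof (HM y). lra. }
   assert (2 * M <= 2 * M * sqrt dd). { rewrite <- (Rmult_1_r (2*M)) at 1. apply Rmult_le_compat_l; lra. }
   assert (0 <= L * sqrt dd) by (apply Rmult_le_pos; lra). lra. Qed.

Lemma convex_d2 f f1 f2 : convex_fun f -> (forall x, derivable_pt_lim f x (f1 x)) ->
  (forall x, derivable_pt_lim f1 x (f2 x)) -> continuity f2 -> forall p, 0 <= f2 p.
Proof. intros cv d1 d2 c2 p. destruct (Rle_lt_dec 0 (f2 p)) as [|neg]; auto. exfalso.
 destruct (c2 p (- f2 p)) as [del [del0 Hd]]. lra.
 assert (loc : forall y, Rabs (y - p) < del -> f2 y < 0).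
 { intros y hy. destruct (Req_dec y p). subst; auto.
   assert (h := Hd y). simpl in h. unfold R_dist in h.
   assert (Rabs (f2 y - f2 p) < - f2 p) by (apply h; split; [split; [exact I | intro E; apply H; rewrite E; reflexivity] | exact hy]).
   apply Rabs_def2 in H0. lra. }
 set (h := del / 2).
 destruct (MVT_cor2 f f1 (p - h) p) as [c2' [E2 [a2 b2]]]. unfold h; lra. intros; auto.
 destruct (MVT_cor2 f f1 p (p + h)) as [c1 [E1 [a1 b1]]]. unfold h; lra. intros; auto.
 destruct (MVT_cor2 f1 f2 c2' c1) as [c3 [E3 [a3 b3]]]. lra. intros; auto.
 assert (f2 c3 < 0). apply loc. apply Rabs_def1; unfold h in *; lra.
 assert (cc := cv (p + h) (p - h) (/2) ltac:(lra)).
 replace (/ 2 * (p + h) + (1 - / 2) * (p - h)) with p in cc by field.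
 assert (0 < h) by (unfold h; lra).
 assert (f (p + h) + f (p - h) - 2 * f p = h * (f2 c3 * (c1 - c2'))).
 { replace (f (p + h) + f (p - h) - 2 * f p) with ((f (p+h) - f p) - (f p - f (p - h))) by ring.
   rewrite E1, E2. replace (p + h - p) with h by ring. replace (p - (p - h)) with h by ring.
   rewrite <- E3. ring. }
 assert (f2 c3 * (c1 - c2') < 0) by nra.
 assert (h * (f2 c3 * (c1 - c2')) < 0) by nra.
 lra. Qed.

Ltac c1 := match goal with
| |- IsC1 (fun _ => ?c) => apply C1_const
| |- IsC1 (fun x => _ - _) => apply C1_minus; c1
| |- IsC1 (fun x => _ + _) => apply C1_plus; c1
| |- IsC1 (fun x => _ / _) => apply C1_div; [c1|c1|idtac]
| |- IsC1 (fun x => _ * _) => apply C1_mult; c1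
| |- IsC1 (fun x => Rpower _ _) => apply C1_Rpower; [c1|idtac]
| _ => assumption || (apply C1_comp; [assumption|c1])
end.

Theorem mainTheorem7
  (H dH : R -> R) (V : R -> R) (alpha eps gamma : R)
  (C1 C2 C3 D1 D2 D3 : R)
  (u u1 u2 m m1 m2 g : R -> R) :
  (forall p, derivable_pt_lim H p (dH p)) ->
  periodic1 V -> continuity V ->
  0 < alpha -> 0 < eps -> eps <= 1 ->
  1 < gamma -> 0 < C1 -> 0 < C2 -> 0 < C3 ->
  (forall p, - C1 + C2 * Rpower (Rabs p) gamma <= H p /\
             H p <= C1 + C3 * Rpower (Rabs p) gamma) ->
  0 < D1 -> 0 < D2 -> 0 < D3 ->
  (forall p, - D1 + D2 * Rpower (Rabs p) gamma <= p * dH p - H p /\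
             p * dH p - H p <= D1 + D3 * Rpower (Rabs p) gamma) ->
  Ck 2 V ->
  convex_fun H ->
  Ck 4 H ->
  periodic1 u -> periodic1 m ->
  (forall x, derivable_pt_lim u x (u1 x)) ->
  (forall x, derivable_pt_lim u1 x (u2 x)) -> continuity u2 ->
  (forall x, derivable_pt_lim m x (m1 x)) ->
  (forall x, derivable_pt_lim m1 x (m2 x)) -> continuity m2 ->
  (forall x, 0 < m x) ->
  (forall x, derivable_pt_lim (fun y => dH (u1 y) * m y) x (g x)) ->
  (forall x, u x - u2 x + H (u1 x) + V x
             = Rpower (m x) alpha + eps * (m x - m2 x)) ->
  (forall x, m x - m2 x - g x = 1 - eps * (u x - u2 x)) ->
  holder_half u2 /\ holder_half m2.
Proof.
intros dHd Vp Vc alpha0 eps0 eps1 g1 C1p C2p C3p A1 D1p D2p D3p A2 CV cvx CH up mp du du1 cu2 dm dm1 cm2 mpos dg E1 E2.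
clear A1 A2.
destruct CH as [f1 [dH1 [f2 [df1 [f3 [df2 [f4 [df3 cf4]]]]]]]].
destruct CV as [V1 [dV [V2 [dV1 cV2]]]].
assert (eqH : forall p, dH p = f1 p) by (intros p; exact (uniqueness_limite H p _ _ (dHd p) (dH1 p))).
assert (Cu : IsC1 u) by (exists u1; split; [exact du | exact (dcont u1 u2 du1)]).
assert (Cu1 : IsC1 u1) by (exists u2; split; [exact du1 | exact cu2]).
assert (Cm : IsC1 m) by (exists m1; split; [exact dm | exact (dcont m1 m2 dm1)]).
assert (Cm1 : IsC1 m1) by (exists m2; split; [exact dm1 | exact cm2]).
assert (CVV : IsC1 V) by (exists V1; split; [exact dV | exact (dcont V1 V2 dV1)]).
assert (CHH : IsC1 H) by (exists f1; split; [exact dH1 | exact (dcont f1 f2 df1)]).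
assert (Cf1 : IsC1 f1) by (exists f2; split; [exact df1 | exact (dcont f2 f3 df2)]).
assert (Cf2 : IsC1 f2) by (exists f3; split; [exact df2 | exact (dcont f3 f4 df3)]).
assert (kpos : forall p, 0 <= f2 p) by exact (convex_d2 H f1 f2 cvx dH1 df1 (dcont f2 f3 df2)).
assert (geq : forall x, g x = f2 (u1 x) * u2 x * m x + f1 (u1 x) * m1 x).
{ intros x.
  pose proof (derivable_pt_lim_mult (fun y => f1 (u1 y)) m x (f2 (u1 x) * u2 x) (m1 x)
     (derivable_pt_lim_comp u1 f1 x (u2 x) (f2 (u1 x)) (du1 x) (df1 _)) (dm x)) as Q.
  assert (EF : (fun y => dH (u1 y) * m y) = (fun y => f1 (u1 y) * m y)).
  { apply functional_extensionality; intros y; rewrite eqH; reflexivity. }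
  pose proof (dg x) as G. rewrite EF in G.
  rewrite (uniqueness_limite _ x _ _ G Q). ring. }
assert (Dpos : forall x, 0 < 1 + eps * (f2 (u1 x) * m x + eps)).
{ intros x. pose proof (kpos (u1 x)). pose proof (mpos x).
  assert (0 <= f2 (u1 x) * m x) by (apply Rmult_le_pos; lra).
  assert (0 <= eps * (f2 (u1 x) * m x + eps)) by (apply Rmult_le_pos; lra). lra. }
assert (Du : forall x, (u x + H (u1 x) + V x - Rpower (m x) alpha - eps * m x
    + eps * (m x - f1 (u1 x) * m1 x - 1 + eps * u x)) / (1 + eps * (f2 (u1 x) * m x + eps)) = u2 x).
{ intros x. pose proof (Dpos x). apply (Rmult_eq_reg_r (1 + eps * (f2 (u1 x) * m x + eps))); [|lra].
  unfold Rdiv. rewrite Rmult_assoc, Rinv_l by lra. rewrite Rmult_1_r.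
  pose proof (E1 x). pose proof (E2 x) as e2. rewrite geq in e2.
  pose proof (f_equal (Rmult eps) e2). nra. }
assert (Cu2 : IsC1 u2).
{ apply (C1_ext _ _ Du). c1. exact mpos. intros x; pose proof (Dpos x); lra. }
assert (Dm : forall x, m x - f1 (u1 x) * m1 x - 1 + eps * u x - (f2 (u1 x) * m x + eps) * u2 x = m2 x).
{ intros x. pose proof (E2 x) as e2. rewrite geq in e2. nra. }
assert (Cm2 : IsC1 m2).
{ apply (C1_ext _ _ Dm). c1. }
split; apply C1_holder; auto.
- apply (periodic_deriv u1 u2); auto. apply (periodic_deriv u u1); auto.
- apply (periodic_deriv m1 m2); auto. apply (periodic_deriv m m1); auto.
Qed.
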